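(* Let $U$ be the $\mathrm{mcG}(q)$ solution of $\dot u=f(u,t)$, $u(0)=u_0$, with residual $R_i(U,t)=\dot U_i(t)-f_i(U(t),t)$, and let $\tilde R$ be the local $L^2$-projection of $R$ onto the trial space, i.e. $\tilde R_i(U,\cdot)|_{I_{ij}}$ is the $L^2(I_{ij})$-orthogonal projection of $R_i(U,\cdot)|_{I_{ij}}$ onto the polynomials of degree $\le q_{ij}$ on $I_{ij}$, for $j=1,\dots,M_i$, $i=1,\dots,N$. Then every $\tilde R_i(U,\cdot)|_{I_{ij}}$ is a (possibly zero) scalar multiple of the Legendre polynomial of degree $q_{ij}$ on $I_{ij}$, i.e. of $t\mapsto P_{q_{ij}}\big(2(t-t_{i,j-1})/k_{ij}-1\big)$.
   Context: $f:\mathbb{R}^N\times(0,T]\to\mathbb{R}^N$ is bounded and Lipschitz in $u$. For each component $i$: partition $0=t_{i0}<\dots<t_{iM_i}=T$, $I_{ij}=(t_{i,j-1},t_{ij}]$, $k_{ij}=t_{ij}-t_{i,j-1}$, degrees $q_{ij}\ge1$. The $\mathrm{mcG}(q)$ solution $U$: each $U_i$ continuous on $[0,T]$, $U_i|_{I_{ij}}$ a polynomial of degree $\le q_{ij}$, $U(0)=u_0$, and $\int_{I_{ij}}\dot U_iv\,dt=\int_{I_{ij}}f_i(U,t)v\,dt$ for all polynomials $v$ of degree $\le q_{ij}-1$ on $I_{ij}$ (exact integration). $P_q$ is the degree-$q$ Legendre polynomial on $[-1,1]$. *)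

(* Defs.v *)
From HB Require Import structures.
From mathcomp Require Import all_boot all_order all_algebra.
From mathcomp Require Import all_classical all_reals all_analysis.
Set Implicit Arguments. Unset Strict Implicit. Unset Printing Implicit Defensive.
Import Order.TTheory GRing.Theory Num.Theory.
Import numFieldNormedType.Exports.
Local Open Scope classical_set_scope.
Local Open Scope ring_scope.

Definition legendre (R : fieldType) (n : nat) : {poly R} :=
  ((2 ^ n * n`!)%:R)^-1 *: ((('X ^+ 2 - 1) ^+ n)^`(n)).

Notation leb R := (@lebesgue_measure R).

Definition Iint (R : realType) (tp : nat -> R) (j : nat) : set R :=
  `]tp j.-1, tp j]%classic.

Definition valid_partitions (R : realType) (N : nat) (T : R)
  (M : 'I_N -> nat) (tp : 'I_N -> nat -> R) : Prop :=
  forall i, tp i 0%N = 0 /\ tp i (M i) = T /\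
            (forall j, (j < M i)%N -> tp i j < tp i j.+1).

Definition bounded_lipschitz (R : realType) (N : nat) (T : R)
  (f : ('I_N -> R) -> R -> 'I_N -> R) : Prop :=
  (exists C : R, forall u t i, 0 < t <= T -> `|f u t i| <= C) /\
  (exists L : R, forall u v t, 0 < t <= T ->
     forall i, `|f u t i - f v t i| <= L * \big[Num.max/0]_(k < N) `|u k - v k|).

Definition Udot (R : realType) (N : nat) (U : R -> 'I_N -> R) (i : 'I_N) : R -> R :=
  derive1 (fun s => U s i).

(* The mcG(q) solution U (U t i = U_i(t)). Exact integration; the integrals
   of f_i(U(t),t) v(t) are required to exist (integrability of f_i(U,.)). *)
Definition mcG_solution (R : realType) (N : nat) (T : R)
  (f : ('I_N -> R) -> R -> 'I_N -> R) (u0 : 'I_N -> R)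
  (M : 'I_N -> nat) (tp : 'I_N -> nat -> R) (q : 'I_N -> nat -> nat)
  (U : R -> 'I_N -> R) : Prop :=
  (forall i, {within `[0, T], continuous (fun t => U t i)}) /\
  (forall i j, (0 < j <= M i)%N ->
     exists p : {poly R}, (size p <= (q i j).+1)%N /\
       forall t, Iint (tp i) j t -> U t i = p.[t]) /\
  (forall i, U 0 i = u0 i) /\
  (forall i j, (0 < j <= M i)%N ->
     (leb R).-integrable (Iint (tp i) j) (fun t => (f (U t) t i)%:E)) /\
  (forall i j, (0 < j <= M i)%N -> forall v : {poly R}, (size v <= q i j)%N ->
     \int[leb R]_(t in Iint (tp i) j) (Udot U i t * v.[t])
     = \int[leb R]_(t in Iint (tp i) j) (f (U t) t i * v.[t])).

Definition residual (R : realType) (N : nat)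
  (f : ('I_N -> R) -> R -> 'I_N -> R) (U : R -> 'I_N -> R) (i : 'I_N) (t : R) : R :=
  Udot U i t - f (U t) t i.

Definition is_L2_proj (R : realType) (I : set R) (qq : nat) (g : R -> R)
  (r : {poly R}) : Prop :=
  (size r <= qq.+1)%N /\
  forall v : {poly R}, (size v <= qq.+1)%N ->
    \int[leb R]_(t in I) ((g t - r.[t]) * v.[t]) = 0.

(* Main.v *)
Require Import Defs.
From HB Require Import structures.
From mathcomp Require Import all_boot all_order all_algebra.
From mathcomp Require Import all_classical all_reals all_analysis.
From mathcomp Require Import measurable_realfun.
From mathcomp Require Import ring lra zify.
Import Order.TTheory GRing.Theory Num.Theory.
Import numFieldNormedType.Exports.
Local Open Scope classical_set_scope.
Local Open Scope ring_scope.

Section Alg.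
Variable R : realFieldType.
Implicit Types p : {poly R}.

Definition prim p : {poly R} := \poly_(i < (size p).+1) (p`_i.-1 / i%:R).

Lemma prim_deriv p : (prim p)^`() = p.
Proof.
apply/polyP => i; rewrite coef_deriv coef_poly /=.
case: ltnP => hi.
- by rewrite -[_ *+ i.+1]mulr_natr divfK // pnatr_eq0.
- by rewrite mul0rn; apply/esym/nth_default; rewrite -ltnS.
Qed.

Lemma size_prim p : (size (prim p) <= (size p).+1)%N.
Proof. exact: size_poly. Qed.

Lemma antider (r : {poly R}) (a : R) k : exists G : {poly R},
  [/\ G^`(k) = r, forall m, (m < k)%N -> G^`(m).[a] = 0 & (size G <= size r + k)%N].
Proof.
elim: k => [|k [G [G1 G2 G3]]].
  by exists r; split => //; rewrite addn0.
exists (prim G - ((prim G).[a])%:P); split.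
- by rewrite derivSn derivB derivC subr0 prim_deriv.
- case=> [_|m mk].
    by rewrite derivn0 hornerD hornerN hornerC subrr.
  by rewrite derivSn derivB derivC subr0 prim_deriv G2.
- apply: (leq_trans (size_polyD _ _)); rewrite geq_max size_polyN.
  rewrite addnS; apply/andP; split.
    by apply: (leq_trans (size_prim _)).
  by apply: (leq_trans (size_polyC_leq1 _)).
Qed.

Lemma leibnizX (Q : {poly R}) (c : R) m :
  (Q * ('X - c%:P))^`(m.+1) = Q^`(m.+1) * ('X - c%:P) + Q^`(m) *+ m.+1.
Proof.
elim: m => [|m IH].
  by rewrite derivn1 derivM derivXsubC mulr1 derivn0 mulr1n derivn1.
rewrite derivnS IH derivD derivM derivXsubC mulr1 derivMn -!derivnS.
by rewrite [in RHS]mulrS addrA.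
Qed.

Lemma mult_root (c : R) n : forall G : {poly R},
  (forall m, (m < n)%N -> G^`(m).[c] = 0) -> ('X - c%:P)^+n %| G.
Proof.
elim: n => [|n IH] G HG; first by rewrite expr0 dvd1p.
have /factor_theorem [Q GQ] : root G c by apply/eqP; have := HG 0%N isT; rewrite derivn0.
rewrite GQ exprSr dvdp_mul //; apply: IH => m mn.
have := HG m.+1 mn; rewrite GQ leibnizX hornerD hornerM.
rewrite hornerD hornerN hornerX hornerC subrr mulr0 add0r hornerMn => /eqP.
by rewrite mulrn_eq0 /= => /eqP.
Qed.

Lemma orth_vanish (a b : R) (q : nat) (r G : {poly R}) :
  G^`(q) = r -> (forall m, (m < q)%N -> G^`(m).[a] = 0) ->
  (forall v : {poly R}, (size v <= q)%N -> forall P : {poly R}, P^`() = r * v -> P.[b] = P.[a]) ->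
  forall m, (m < q)%N -> G^`(m).[b] = 0.
Proof.
move=> Gq Ga orth.
have T : forall k, (k <= q)%N -> forall v : {poly R}, (size v <= q - k)%N ->
    forall P : {poly R}, P^`() = G^`(q - k) * v -> P.[b] = P.[a].
  elim=> [|k IH] kq v sv P HP.
    by rewrite subn0 in sv HP; rewrite Gq in HP; exact: orth v sv P HP.
  have e : (q - k = (q - k.+1).+1)%N by lia.
  set s := (q - k.+1)%N in sv HP e.
  have sq : (s < q)%N by rewrite /s; lia.
  have Gb : G^`(s).[b] = 0.
    rewrite -(Ga s sq).
    apply: (IH (ltnW kq) 1); first by rewrite e -polyC1; apply: leq_trans (size_polyC_leq1 1) _.
    by rewrite e mulr1 derivnS.
  pose Q := G^`(s) * prim v - P.
  have : Q.[b] = Q.[a].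
    apply: (IH (ltnW kq) (prim v)).
      by rewrite e; apply: leq_trans (size_prim _) _.
    by rewrite /Q derivB derivM prim_deriv HP e derivnS addrK.
  rewrite /Q !hornerD !hornerN !hornerM Gb (Ga s sq) !mul0r !sub0r.
  by move/oppr_inj.
move=> m mq.
have e : (q - (q - m.+1) = m.+1)%N by lia.
rewrite -(Ga m mq); apply: (T (q - m.+1)%N _ 1); first by lia.
  by rewrite size_poly1 e.
by rewrite mulr1 e derivnS.
Qed.

Lemma factor_G (a b : R) q (G : {poly R}) : a != b ->
  (forall m, (m < q)%N -> G^`(m).[a] = 0) -> (forall m, (m < q)%N -> G^`(m).[b] = 0) ->
  (size G <= q.*2.+1)%N ->
  exists c, G = c *: (('X - a%:P)^+q * ('X - b%:P)^+q).
Proof.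
move=> ab Ha Hb sG.
set W := ('X - a%:P)^+q * ('X - b%:P)^+q.
have : W %| G.
  rewrite Gauss_dvdp ?mult_root //.
  apply: (coprimep_expl q); apply: (coprimep_expr q).
  by rewrite coprimep_XsubC root_XsubC eq_sym.
case/dvdpP => K GK.
have Wn0 : W != 0.
  by rewrite mulf_neq0 // expf_neq0 // -size_poly_eq0 size_XsubC.
have sW : size W = q.*2.+1.
  rewrite /W size_mul ?size_exp_XsubC ?expf_neq0 // -?size_poly_eq0 ?size_XsubC //.
  lia.
have sK : (size K <= 1)%N.
  case: (eqVneq K 0) => [->|K0]; first by rewrite size_poly0.
  move: sG; rewrite GK size_mul // sW.
  case: (size K) => // n; lia.
by exists K`_0; rewrite GK {1}(size1_polyC sK) mul_polyC.
Qed.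

Lemma poly_comp_exp (A p : {poly R}) n : p ^+ n \Po A = (p \Po A) ^+ n.
Proof.
elim: n => [|n IH]; first by rewrite !expr0 -polyC1 comp_polyC.
by rewrite !exprS comp_polyM IH.
Qed.

Lemma leg_rel (a b : R) q : a < b -> exists2 lam : R, lam != 0 &
  forall t, (legendre R q).[2 * (t - a) / (b - a) - 1] =
            lam * ((('X - a%:P)^+q * ('X - b%:P)^+q)^`(q)).[t].
Proof.
move=> ab; set h := b - a.
have h0 : h != 0 by rewrite /h subr_eq0 gt_eqF.
set al := 2 / h.
have al0 : al != 0 by rewrite /al mulf_neq0 ?invr_eq0 // pnatr_eq0.
have alh : al * h = 2 by rewrite /al divfK.
set A : {poly R} := al%:P * ('X - a%:P) - 1.
have At t : A.[t] = 2 * (t - a) / h - 1.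
  by rewrite /A !hornerE /al; ring.
have dA : A^`() = al%:P.
  by rewrite /A derivB derivM derivC mul0r add0r derivXsubC mulr1 -polyC1 derivC subr0.
have compD n p : (p \Po A)^`(n) = al^+n *: (p^`(n) \Po A).
  elim: n p => [|n IH] p; first by rewrite !derivn0 expr0 scale1r.
  rewrite derivnS IH derivZ deriv_comp dA -derivnS mulrC mul_polyC scalerA.
  by rewrite -exprSr.
set W := ('X - a%:P)^+q * ('X - b%:P)^+q.
have e1 : al%:P * ('X - b%:P) = A - 1.
  have -> : 'X - b%:P = ('X - a%:P) - h%:P by rewrite /h polyCB; ring.
  rewrite mulrBr -polyCM alh /A (_ : 2%:P = 1 + 1); last by rewrite rmorphD /= polyC1.
  ring.
have SA : ('X ^+ 2 - 1) ^+ q \Po A = (al ^+ 2) ^+ q *: W.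
  rewrite poly_comp_exp comp_polyB poly_comp_exp comp_polyX -polyC1 comp_polyC polyC1.
  have -> : A ^+ 2 - 1 = (al ^+ 2) *: (('X - a%:P) * ('X - b%:P)).
    rewrite -mul_polyC polyC_exp.
    have -> : A ^+ 2 - 1 = (A - 1) * (A + 1) by ring.
    rewrite -e1 /A; ring.
  rewrite -mul_polyC exprMn -polyC_exp mul_polyC /W; congr (_ *: _); exact: exprMn.
have H : (('X ^+ 2 - 1) ^+ q)^`(q) \Po A = (al^+q)^-1 *: (('X ^+ 2 - 1) ^+ q \Po A)^`(q).
  by rewrite compD scalerA mulVf ?scale1r // expf_neq0.
set k := ((2 ^ q * q`!)%:R : R)^-1.
have k0 : k != 0.
  by rewrite /k invr_eq0 pnatr_eq0 -lt0n muln_gt0 expn_gt0 fact_gt0.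
exists (k * (al^+q)^-1 * (al ^+ 2) ^+ q).
  by rewrite !mulf_neq0 // ?invr_eq0 ?expf_neq0 // ?expf_neq0.
move=> t; rewrite -At -horner_comp /legendre comp_polyZ H SA derivnZ !scalerA.
by rewrite hornerZ.
Qed.

Lemma ALG (a b : R) (q : nat) (r : {poly R}) : a < b -> (1 <= q)%N ->
  (size r <= q.+1)%N ->
  (forall v : {poly R}, (size v <= q)%N -> forall P : {poly R}, P^`() = r * v -> P.[b] = P.[a]) ->
  exists c, forall t, r.[t] = c * (legendre R q).[2 * (t - a) / (b - a) - 1].
Proof.
move=> ab _ sr orth.
have [G [Gq Ga sG]] := antider r a q.
have Gb := @orth_vanish a b q r G Gq Ga orth.
have sG2 : (size G <= q.*2.+1)%N by lia.
have [K GK] := @factor_G a b q G (negbT (lt_eqF ab)) Ga Gb sG2.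
have [lam lam0 Hl] := @leg_rel a b q ab.
exists (K / lam) => t.
by rewrite Hl -Gq GK derivnZ hornerZ mulrA divfK.
Qed.

End Alg.

Section Ana.
Context {R : realType}.
Local Notation mu := (@lebesgue_measure R).

Lemma poly_cont_within (P : {poly R}) (A : set R) : {within A, continuous (horner P)}.
Proof. by apply: continuous_subspaceT => x; exact: continuous_horner. Qed.

Lemma poly_integrable (P : {poly R}) (a b : R) (A : set R) :
  measurable A -> A `<=` `[a, b] -> mu.-integrable A (EFin \o horner P).
Proof.
move=> mA Aab; apply: (@integrableS _ _ _ mu `[a, b] A) => //.
apply: continuous_compact_integrable; first exact: segment_compact.
exact: poly_cont_within.
Qed.

Lemma poly_bounded (P : {poly R}) a b (A : set R) : A `<=` `[a,b] ->
  [bounded P.[x] | x in A].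
Proof.
move=> Aab.
have /compact_bounded[M [_ mrt]] :=
  continuous_compact (poly_cont_within P `[a, b]) (@segment_compact _ a b).
exists M; split; rewrite ?num_real // => y My x Ax.
by apply: mrt => //; exists x => //; exact: Aab.
Qed.

Lemma poly_FTC (P : {poly R}) a b : a < b ->
  (\int[mu]_(x in `]a, b[) (P^`().[x])%:E = (P.[b] - P.[a])%:E)%E.
Proof.
move=> ab.
rewrite -(@integral_itv_bndoo _ _ _ _ true false); last first.
  apply/measurable_EFinP; apply: measurable_funTS.
  exact: continuous_measurable_fun (@continuous_horner _ _).
rewrite (@continuous_FTC2 _ (horner P^`()) (horner P) _ _ ab (poly_cont_within _ _)) ?EFinB //.
- split.
  + by move=> x _; exact: derivable_horner.
  + by apply: cvg_at_right_filter; exact: continuous_horner.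
  + by apply: cvg_at_left_filter; exact: continuous_horner.
- by move=> x _; rewrite -derivE.
Qed.

End Ana.

Theorem lemma6p8 (R : realType) (N : nat) (T : R)
  (f : ('I_N -> R) -> R -> 'I_N -> R) (u0 : 'I_N -> R)
  (M : 'I_N -> nat) (tp : 'I_N -> nat -> R) (q : 'I_N -> nat -> nat)
  (U : R -> 'I_N -> R) :
  0 < T ->
  bounded_lipschitz T f ->
  valid_partitions T M tp ->
  (forall i j, (0 < j <= M i)%N -> (1 <= q i j)%N) ->
  mcG_solution T f u0 M tp q U ->
  forall (i : 'I_N) (j : nat), (0 < j <= M i)%N ->
  forall r : {poly R},
    is_L2_proj (Iint (tp i) j) (q i j) (residual f U i) r ->
    exists c : R, forall t, Iint (tp i) j t ->
      r.[t] = c * (legendre R (q i j)).[2 * (t - tp i j.-1) / (tp i j - tp i j.-1) - 1].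
Proof.
move=> _ _ vp qpos [_ [Hpoly [_ [Hint Hgal]]]] i j Hj r [Hr Hproj].
have ab : tp i j.-1 < tp i j.
  have [_ [_ Hlt]] := vp i; case/andP: Hj => j0 jM.
  have h1 : (j.-1 < M i)%N by rewrite prednK.
  by have := Hlt j.-1 h1; rewrite prednK.
have [p [sp Hp]] := Hpoly i j Hj.
have gint := Hint i j Hj.
move: Hp gint (Hgal i j Hj) Hproj; clear Hgal.
rewrite /Iint /residual.
move: (qpos i j Hj) Hr.
set a := tp i j.-1; set b := tp i j; set qq := q i j.
set g := fun t => f (U t) t i.
move=> q1 Hr Hp gint Gal Proj.
have [c Hc] : exists c, forall t, r.[t] = c * (legendre R qq).[2 * (t - a) / (b - a) - 1];
  last by exists c => t _; exact: Hc.
apply: (@ALG R a b qq r ab q1 Hr) => v sv P HP.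
pose mu := @lebesgue_measure R.
have mO : @measurable _ (measurableTypeR R) `]a, b[ := measurable_itv `]a, b[.
have mD : @measurable _ (measurableTypeR R) `]a, b] := measurable_itv `]a, b].
have OD : (`]a, b[ : set R) `<=` `]a, b].
  by apply: subset_itvl; rewrite bnd_simp.
have Dab : (`]a, b] : set R) `<=` `[a, b].
  by apply: subset_itvr; rewrite bnd_simp.
have Oab : (`]a, b[ : set R) `<=` `[a, b] by move=> x /OD; exact: Dab.
have psiE t : `]a, b[%classic t -> Udot U i t = p^`().[t].
  move=> tO; rewrite /Udot derivE !derive1E; apply: near_eq_derive.
  have := near_in_itvoo tO; apply: filterS => s; rewrite inE => sO.
  by apply: Hp; apply: OD.
have pint (h : {poly R}) (A : set R) : measurable A -> A `<=` `[a, b] ->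
    mu.-integrable A (EFin \o horner h).
  move=> mA Ah; exact: (@poly_integrable R h a b A mA Ah).
have gvint : mu.-integrable `]a, b] (EFin \o (fun t => g t * v.[t])).
  have gint' : (@lebesgue_measure R).-integrable (`]a, b] : set R) (EFin \o g) by exact: gint.
  have := @integrableMl _ _ _ (@lebesgue_measure R) _ mD (EFin \o g) (horner v) gint' _ (@poly_bounded R v a b _ Dab).
  apply.
  exact: measurable_funTS (continuous_measurable_fun (@continuous_horner _ _)).
have gvintO : mu.-integrable `]a, b[ (EFin \o (fun t => g t * v.[t])).
  exact: (@integrableS _ _ _ mu _ _ _ mD mO OD gvint).
have E1 : \int[mu]_(t in `]a, b]) (Udot U i t * v.[t]) =
          \int[mu]_(t in `]a, b[) ((p^`() * v).[t]).
  rewrite -Rintegral_itv_bndo_bndc.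
    by apply: eq_Rintegral => t /set_mem tO; rewrite psiE // hornerM.
  apply: (eq_integrable mO (EFin \o horner (p^`() * v))); last exact: pint.
  by move=> t /set_mem tO /=; rewrite psiE // hornerM.
have E2 : \int[mu]_(t in `]a, b]) (g t * v.[t]) =
          \int[mu]_(t in `]a, b[) (g t * v.[t]).
  by rewrite -Rintegral_itv_bndo_bndc.
have hint : mu.-integrable `]a, b[ (EFin \o (fun t => (p^`() * v - r * v).[t] - g t * v.[t])).
  have H := integrableB mO (pint (p^`() * v - r * v) _ mO Oab) gvintO.
  apply: (eq_integrable mO _ _ _ H).
  by move=> t _; rewrite /= EFinB.
have E3 : \int[mu]_(t in `]a, b]) ((Udot U i t - g t - r.[t]) * v.[t]) =
          \int[mu]_(t in `]a, b[) ((p^`() * v - r * v).[t] - g t * v.[t]).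
  rewrite -Rintegral_itv_bndo_bndc.
    apply: eq_Rintegral => t /set_mem tO; rewrite psiE // hornerD hornerN !hornerM; ring.
  apply: (eq_integrable mO _ _ _ hint) => t /set_mem tO /=.
  by rewrite psiE // hornerD hornerN !hornerM; congr (_%:E); ring.
have := Proj v (leq_trans sv (leqnSn _)).
rewrite E3 RintegralB //; last exact: pint.
rewrite (eq_Rintegral mu (g := fun t : measurableTypeR R => (p^`() * v).[t] - (r * v).[t])); last first.
  by move=> t _; rewrite hornerD hornerN.
rewrite RintegralB //; try exact: pint.
rewrite -E1 Gal // E2.
have -> : \int[mu]_(t in `]a, b[) (r * v).[t] = P.[b] - P.[a].
  by rewrite /Rintegral -HP poly_FTC.
by move=> H; apply/eqP; rewrite -subr_eq0; apply/eqP; lra.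
Qed.
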